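(* Consider a combinatorial auction with $2$ bidders and $2$ items $a,b$, where both bidders have monotone subadditive valuations. Let $\mathcal M_2$ be the randomized mechanism that selects a bidder $i$ uniformly at random and an item $j$ uniformly at random, allocates item $j$ to bidder $i$, and then runs an ascending second-price auction for the remaining item among both bidders. Then $\mathcal M_2$ achieves a $\frac{4}{3}$-approximation to the optimal social welfare: on every instance its expected welfare under truthful play is at least $\frac34\mathrm{OPT}$.
   Context: A valuation $v:2^{\{a,b\}}\to\mathbb{R}_{\ge0}$ is monotone if $v(T)\le v(T')$ whenever $T\subseteq T'$, and subadditive if $v(T\cup T')\le v(T)+v(T')$ for all $T,T'$. In the auction for the remaining item, each bidder bids her marginal value for that item given the bundle she already holds; the highest bidder wins. $\mathrm{OPT}$ is the maximum of $v_1(T_1)+v_2(T_2)$ over disjoint $T_1,T_2\subseteq\{a,b\}$. *)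

(* Defs.v *)
(* Two bidders ('I_2) and two items ('I_2: item 0 = a, item 1 = b). *)
From mathcomp Require Import all_boot all_order all_algebra.
Set Implicit Arguments. Unset Strict Implicit. Unset Printing Implicit Defensive.
Import Order.TTheory GRing.Theory Num.Theory.
Local Open Scope ring_scope.

Definition bidder := 'I_2.
Definition item := 'I_2.

Definition other (x : 'I_2) : 'I_2 := if x == ord0 then ord_max else ord0.

Section Defs.
Variable R : realFieldType.

Definition nonneg_val (v : {set item} -> R) := forall T, 0 <= v T.
Definition monotone_val (v : {set item} -> R) :=
  forall T T' : {set item}, T \subset T' -> v T <= v T'.
Definition subadditive_val (v : {set item} -> R) :=
  forall T T' : {set item}, v (T :|: T') <= v T + v T'.

(* OPT = max over disjoint (T1, T2) of v1 T1 + v2 T2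
   (values are nonnegative, so the neutral element 0 of the max is harmless). *)
Definition OPT (v : bidder -> {set item} -> R) : R :=
  \big[Num.max/0]_(p : {set item} * {set item} | [disjoint p.1 & p.2])
     (v ord0 p.1 + v ord_max p.2).

(* Outcome of M_2 when bidder i receives item j, under truthful play:
   in the (ascending second-price) auction for the remaining item j' = other j,
   bidder i bids v_i({j,j'}) - v_i({j}) and bidder k = other i bids
   v_k({j'}) - v_k(∅); the highest bidder wins. *)
Definition M2_welfare (v : bidder -> {set item} -> R) (tb : bool)
    (i : bidder) (j : item) : R :=
  let k := other i in
  let j' := other j in
  let bid_i := v i [set j; j'] - v i [set j] in
  let bid_k := v k [set j'] - v k set0 in
  let i_wins := (bid_k < bid_i) || ((bid_i == bid_k) && tb) in
  if i_wins then v i [set j; j'] + v k set0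
  else v i [set j] + v k [set j'].

(* Expected welfare: i and j independently uniform on {0,1}. *)
Definition M2_expected_welfare (v : bidder -> {set item} -> R)
    (tb : bidder -> item -> bool) : R :=
  (1 / 4) * \sum_(i : bidder) \sum_(j : item) M2_welfare v (tb i j) i j.

End Defs.

(* Main.v *)
Require Import Defs.
From mathcomp Require Import all_boot all_order all_algebra.
From mathcomp Require Import lra.
Import Order.TTheory GRing.Theory Num.Theory.
Local Open Scope ring_scope.

Lemma ifmax (R : realFieldType) (X Y U V : R) (tb : bool) :
  (if (U - V < X - Y) || ((X - Y == U - V) && tb) then X + V else Y + U)
  = Num.max (X + V) (Y + U).
Proof.
have [h|h] := ltrP (U - V) (X - Y).
  by rewrite /= max_l //; lra.
case: eqP => [e|ne] /=.
  case: tb; rewrite max_l //; lra.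
by rewrite max_r //; lra.
Qed.

Lemma set2_cases (T : {set 'I_2}) :
  T = set0 \/ T = [set ord0] \/ T = [set ord_max] \/ T = setT.
Proof.
have H : forall x : 'I_2, x = ord0 \/ x = ord_max.
  by case=> [[|[|n]] h] //; [left|right]; apply: val_inj.
case: (boolP (ord0 \in T)) => h0; case: (boolP (ord_max \in T)) => h1.
- right; right; right; apply/setP => x; rewrite inE; by case: (H x) => ->.
- right; left; apply/setP => x; rewrite inE; case: (H x) => ->; by [rewrite h0 | rewrite (negbTE h1)].
- right; right; left; apply/setP => x; rewrite inE; case: (H x) => ->; by [rewrite h1 | rewrite (negbTE h0)].
- left; apply/setP => x; rewrite inE; case: (H x) => ->; by [rewrite (negbTE h1) | rewrite (negbTE h0)].
Qed.

Lemma o0 : other ord0 = ord_max. Proof. by []. Qed.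
Lemma o1 : other (ord_max : 'I_2) = ord0. Proof. by []. Qed.

Theorem claimB3 (R : realFieldType) (v : bidder -> {set item} -> R)
  (tb : bidder -> item -> bool) :
  (forall b, nonneg_val (v b)) ->
  (forall b, monotone_val (v b)) ->
  (forall b, subadditive_val (v b)) ->
  M2_expected_welfare v tb >= (3 / 4) * OPT v.
Proof.
move=> hn hm hs.
set a : item := ord0. set b : item := ord_max.
set i0 : bidder := ord0. set i1 : bidder := ord_max.
have Tab : [set b; a] = [set a; b] by rewrite setUC.
set x0 := v i0 [set a]. set y0 := v i0 [set b]. set z0 := v i0 [set a; b].
set e0 := v i0 set0.
set x1 := v i1 [set a]. set y1 := v i1 [set b]. set z1 := v i1 [set a; b].
set e1 := v i1 set0.
have le0 : forall i, v i set0 <= v i [set a] by move=> i; apply: hm; apply: sub0set.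
have lea : forall i, v i [set a] <= v i [set a; b].
  by move=> i; apply: hm; rewrite subsetUl.
have leb : forall i, v i [set b] <= v i [set a; b].
  by move=> i; apply: hm; rewrite subsetUr.
have sub : forall i, v i [set a; b] <= v i [set a] + v i [set b] by move=> i; apply: hs.
have ne : forall i, 0 <= v i set0 by move=> i; apply: hn.
have := le0 i0; have := le0 i1; have := lea i0; have := lea i1;
have := leb i0; have := leb i1; have := sub i0; have := sub i1;
have := ne i0; have := ne i1. rewrite -/x0 -/y0 -/z0 -/e0 -/x1 -/y1 -/z1 -/e1.
move=> n1 n0 s1 s0 b1 b0 a1 a0 l1 l0.
set A := x0 + y1. set B := y0 + x1. set P := z0 + e1. set Q := z1 + e0.
have hOPT : forall M : R, A <= M -> B <= M -> P <= M -> Q <= M -> OPT v <= M.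
  move=> M; rewrite /A /B /P /Q => MA MB MP MQ.
  rewrite /OPT; apply: (big_ind (fun t => t <= M)).
  - have : 0 <= x0 by apply: hn. have : 0 <= y1 by apply: hn. lra.
  - by move=> p q hp hq; rewrite ge_max hp hq.
  case=> T1 T2 /= hd.
  have hT : setT = [set a; b] :> {set item}.
    apply/setP => x; rewrite !inE; case: x => [[|[|n]] h] //.
  have := set2_cases T1; have := set2_cases T2.
  move=> [E2|[E2|[E2|E2]]] [E1|[E1|[E1|E1]]]; rewrite E1 E2 in hd *; rewrite ?hT -/x0 -/y0 -/z0 -/e0 -/x1 -/y1 -/z1 -/e1;
   try lra.
  all: try (by move: (disjointFr hd (x:=a)); rewrite !inE ?eqxx => /(_ isT)).
  all: try (by move: (disjointFr hd (x:=b)); rewrite !inE ?eqxx => /(_ isT)).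
have W00 : forall t, M2_welfare v t i0 a = Num.max P A.
  by move=> t; rewrite /M2_welfare ifmax.
have W01 : forall t, M2_welfare v t i0 b = Num.max P B.
  by move=> t; rewrite /M2_welfare ifmax Tab.
have W10 : forall t, M2_welfare v t i1 a = Num.max Q B.
  by move=> t; rewrite /M2_welfare ifmax /Q /B addrC [y0 + _]addrC.
have W11 : forall t, M2_welfare v t i1 b = Num.max Q A.
  by move=> t; rewrite /M2_welfare ifmax Tab /Q /A addrC [x0 + _]addrC.
unfold M2_expected_welfare.
change (3/4 * OPT v <= 1/4 * \sum_(i < 2) \sum_(j < 2) M2_welfare v (tb i j) i j).
rewrite !big_ord_recl !big_ord0.
have -> : lift ord0 ord0 = ord_max :> 'I_2 by apply: val_inj.
rewrite -/a -/b -/i0 -/i1 W00 W01 W10 W11 !addr0.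
have f1 : P <= Num.max P A /\ A <= Num.max P A by rewrite !le_max !lexx orbT.
have f2 : P <= Num.max P B /\ B <= Num.max P B by rewrite !le_max !lexx orbT.
have f3 : Q <= Num.max Q B /\ B <= Num.max Q B by rewrite !le_max !lexx orbT.
have f4 : Q <= Num.max Q A /\ A <= Num.max Q A by rewrite !le_max !lexx orbT.
move: f1 f2 f3 f4 hOPT; rewrite /A /B /P /Q.
move: (Num.max _ _) => m1; move: (Num.max _ _) => m2; move: (Num.max _ _) => m3; move: (Num.max _ _) => m4.
move=> [f1 g1] [f2 g2] [f3 g3] [f4 g4] hOPT.
have := hOPT (4/3 * (1/4 * (m1 + m2 + (m3 + m4)))).
lra.
Qed.
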